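(* Let $\mathcal{G}'$ and $\mathcal{G}''$ be two simple directed graphs on the same finite vertex set $\Pi$, each containing exactly one root component. Then there is a finite sequence of simple directed graphs $\mathcal{G}'=\mathcal{G}_0,\mathcal{G}_1,\dots,\mathcal{G}_k=\mathcal{G}''$ on $\Pi$, each containing exactly one root component, such that any two consecutive graphs differ in at most one edge. Moreover, if $\mathcal{G}'$ and $\mathcal{G}''$ have the same root component $\mathcal{R}$, the sequence can be chosen so that every $\mathcal{G}_i$ has root component $\mathcal{R}$.
   Context: A root component of a directed graph $\mathcal{G}$ is a strongly connected component $\mathcal{R}$ of $\mathcal{G}$ such that there is no edge $(q\to p)$ in $\mathcal{G}$ with $p\in\mathcal{R}$ and $q\notin\mathcal{R}$. *)

(* Defs.v *)
From mathcomp Require Import all_boot.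
Set Implicit Arguments. Unset Strict Implicit. Unset Printing Implicit Defensive.

(* A simple directed graph on a finite vertex set T is an edge relation
   g : rel T (g q p means there is an edge q -> p); simple = no self-loops
   (multi-edges are impossible for a relation). *)
Definition simple_digraph (T : finType) (g : rel T) : Prop := irreflexive g.

Definition scc (T : finType) (g : rel T) (R : {set T}) : Prop :=
  R != set0 /\
  forall x, x \in R -> forall y, (y \in R) = (connect g x y && connect g y x).

Definition root_component (T : finType) (g : rel T) (R : {set T}) : Prop :=
  scc g R /\ forall q p, g q p -> p \in R -> q \in R.

Definition unique_root (T : finType) (g : rel T) (R : {set T}) : Prop :=
  forall R', root_component g R' <-> R' = R.

Definition has_unique_root (T : finType) (g : rel T) : Prop :=
  exists R, unique_root g R.

Definition differ_at_most_one_edge (T : finType) (g h : rel T) : Prop :=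
  #|[set e : T * T | g e.1 e.2 != h e.1 e.2]| <= 1.

(* Main.v *)
Require Import Defs.
From mathcomp Require Import all_boot.
From Stdlib Require Import FunctionalExtensionality.
Set Implicit Arguments. Unset Strict Implicit. Unset Printing Implicit Defensive.

Definition Pr (T : finType) (g : rel T) (R : {set T}) :=
  R != set0 /\ (forall x, x \in R -> forall y, connect g x y) /\
  (forall q p, g q p -> p \in R -> q \in R).

Lemma closed_connect (T : finType) (g : rel T) (R : {set T}) :
  (forall q p, g q p -> p \in R -> q \in R) ->
  forall x y, connect g x y -> y \in R -> x \in R.
Proof.
move=> H x y /connectP [s Hp ->]; elim: s x Hp => [|z s IH] x //= /andP[Hxz Hp] Hl.
exact: H Hxz (IH z Hp Hl).
Qed.
Arguments closed_connect {T g R} H {x y}.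

Lemma connect_mono (T : finType) (g h : rel T) :
  (forall x y, g x y -> h x y) -> forall x y, connect g x y -> connect h x y.
Proof.
move=> H x y /connectP [s Hp ->]; elim: s x Hp => [|z s IH] x /=.
  by rewrite connect0.
move/andP=> [Hxz Hp]; exact: (connect_trans (connect1 (H _ _ Hxz)) (IH _ Hp)).
Qed.

Lemma P_unique (T : finType) (g : rel T) R : Pr g R -> unique_root g R.
Proof.
move=> [R0 [Hreach Hcl]] R'; split.
- move=> [[R'0 Hscc] Hcl'].
  have [z zR'] := set0Pn _ R'0.
  have [x xR] := set0Pn _ R0.
  have sub1 : forall u, u \in R -> u \in R'
    := fun u uR => closed_connect Hcl' (Hreach u uR z) zR'.
  apply/setP => u; apply/idP/idP => [uR'|/sub1 //].
  have xR' := sub1 x xR.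
  rewrite (Hscc x xR' u) in uR'; case/andP: uR' => _ Hux.
  exact: (closed_connect Hcl Hux xR).
- move=> ->; split; [split=> // x xR y|exact Hcl].
  apply/idP/andP => [yR|[_ Hyx]]. 2: exact: (closed_connect Hcl Hyx xR).
  by split; apply: Hreach.
Qed.

Lemma unique_P (T : finType) (g : rel T) R : unique_root g R -> Pr g R.
Proof.
move=> HU.
have [[R0 Hscc] Hcl] : root_component g R by apply/HU.
split=> //; split=> // x xR y.
have Hex : forall n z, #|[set w | connect g w z]| <= n ->
   exists z', connect g z' z /\ forall w, connect g w z' -> connect g z' w.
  elim=> [|n IH] z0 Hn.
  - by move: Hn; rewrite leqn0 cards_eq0 => /eqP/setP/(_ z0); rewrite !inE connect0.
  - case: (boolP [exists w, connect g w z0 && ~~ connect g z0 w])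
      => [/existsP[w /andP[Hw Hn']]|/existsPn Hall].
    + have Hp : [set u | connect g u w] \proper [set u | connect g u z0].
        apply/properP; split.
          by apply/subsetP => u; rewrite !inE => Hu; exact: (connect_trans Hu Hw).
        by exists z0; rewrite !inE ?connect0.
      have [z' [H1 H2]] := IH w (leq_trans (proper_card Hp) Hn).
      by exists z'; split => //; exact: (connect_trans H1 Hw).
    + exists z0; split => [|w Hw]; first exact: connect0.
      by move: (Hall w); rewrite Hw /= negbK.
have [z [Hzy Hmin]] := Hex _ y (leqnn _).
set R' := [set w | connect g w z].
have HR' : root_component g R'.
  split; [split|].
  - by apply/set0Pn; exists z; rewrite inE connect0.
  - move=> u; rewrite inE => Huz v; rewrite inE.
    have Hzu := Hmin u Huz.
    apply/idP/andP => [Hvz|[Huv Hvu]].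
    + split; [exact: (connect_trans Huz (Hmin v Hvz))|exact: (connect_trans Hvz Hzu)].
    + exact: (connect_trans Hvu Huz).
  - by move=> q p Hqp; rewrite !inE => Hpz; exact: (connect_trans (connect1 Hqp) Hpz).
have ER := proj1 (HU R') HR'.
have zR : z \in R by rewrite -ER inE connect0.
have := Hscc x xR z; rewrite zR => /esym/andP[Hxz _].
exact: (connect_trans Hxz Hzy).
Qed.

Inductive chain (T : finType) (Q : rel T -> Prop) : rel T -> rel T -> Prop :=
| ch0 g : Q g -> chain Q g g
| chS g h k : Q g -> differ_at_most_one_edge g h -> chain Q h k -> chain Q g k.

Lemma chain_Ql (T : finType) (Q : rel T -> Prop) g h : chain Q g h -> Q g.
Proof. by case. Qed.

Lemma chain_trans (T : finType) (Q : rel T -> Prop) g h k :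
  chain Q g h -> chain Q h k -> chain Q g k.
Proof.
elim=> [//|g1 h1 k1 Hq Hd _ IH] H; exact: (chS Hq Hd (IH H)).
Qed.

Lemma differ_sym (T : finType) (g h : rel T) :
  differ_at_most_one_edge g h -> differ_at_most_one_edge h g.
Proof.
rewrite /differ_at_most_one_edge.
have -> : [set e : T * T | h e.1 e.2 != g e.1 e.2] = [set e : T * T | g e.1 e.2 != h e.1 e.2].
  by apply/setP => e; rewrite !inE eq_sym.
done.
Qed.

Lemma chain_sym (T : finType) (Q : rel T -> Prop) g h : chain Q g h -> chain Q h g.
Proof.
elim=> [g0 Hq|g1 h1 k1 Hq Hd Hc IH]; first exact: ch0.
apply: (chain_trans IH); apply: (chS (chain_Ql Hc) (differ_sym Hd)); exact: ch0.
Qed.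

Lemma chain_mono (T : finType) (Q1 Q2 : rel T -> Prop) g h :
  (forall g, Q1 g -> Q2 g) -> chain Q1 g h -> chain Q2 g h.
Proof.
move=> HQ; elim=> [g0 Hq|g1 h1 k1 Hq Hd Hc IH]; first exact: (ch0 (HQ _ Hq)).
exact: (chS (HQ _ Hq) Hd IH).
Qed.

Lemma chain_ex (T : finType) (Q : rel T -> Prop) g h : chain Q g h ->
  exists (k : nat) (G : nat -> rel T),
      G 0 =2 g /\ G k =2 h /\
      (forall i, i <= k -> Q (G i)) /\
      (forall i, i < k -> differ_at_most_one_edge (G i) (G i.+1)).
Proof.
elim=> [g0 Hq|g1 h1 k1 Hq Hd Hc [k [G [H0 [Hk [HQ HD]]]]]].
  by exists 0, (fun _ => g0); split=> //; split=> //; split=> // i; rewrite leqn0 => /eqP->.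
have E0 : G 0 = h1.
  by apply: functional_extensionality => x; apply: functional_extensionality => y; apply: H0.
exists k.+1, (fun i => if i is j.+1 then G j else g1); split=> //; split=> //; split.
  by case=> // j; rewrite ltnS => Hj; apply: HQ.
case=> [_|j]; first by rewrite E0.
rewrite ltnS => Hj; exact: HD.
Qed.

Definition upd (T : finType) (g : rel T) a b (v : bool) : rel T :=
  fun x y => if (x == a) && (y == b) then v else g x y.

Definition diffset (T : finType) (g h : rel T) := [set e : T * T | g e.1 e.2 != h e.1 e.2].

Lemma differ_upd (T : finType) (g : rel T) a b v : differ_at_most_one_edge g (upd g a b v).
Proof.
rewrite /differ_at_most_one_edge -(cards1 (a, b)); apply: subset_leq_card.
apply/subsetP => -[x y]; rewrite !inE /upd /= xpair_eqE.
by case: ifP => // _; rewrite eqxx.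
Qed.

Lemma diffset_upd (T : finType) (g t : rel T) a b :
  diffset (upd g a b (t a b)) t = diffset g t :\ (a, b).
Proof.
apply/setP => -[x y]; rewrite !inE /upd /= xpair_eqE.
by case: ifP => [/andP[/eqP-> /eqP->]|_]; rewrite ?eqxx.
Qed.

Lemma diff0 (T : finType) (g t : rel T) : #|diffset g t| = 0 -> g = t.
Proof.
move=> H; apply: functional_extensionality => x; apply: functional_extensionality => y.
move/eqP: H; rewrite cards_eq0 => /eqP/setP/(_ (x, y)); rewrite !inE /=.
by move/negbFE/eqP.
Qed.

Definition CR (T : finType) (R : {set T}) : rel T := fun x y => (x \in R) && (x != y).

Definition QR (T : finType) (R : {set T}) (h : rel T) := simple_digraph h /\ Pr h R.

Lemma flip (T : finType) (R : {set T}) (g : rel T) :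
  simple_digraph g -> Pr g R -> 0 < #|diffset g (CR R)| ->
  exists a b, (a, b) \in diffset g (CR R) /\ QR R (upd g a b (CR R a b)).
Proof.
move=> Hs [R0 [Hreach Hcl]] Hpos.
case: (boolP [exists e, (e \in diffset g (CR R)) && (e.1 \in R)])
  => [/existsP[[a b] /andP[Hd /= HaR]]|/existsPn Hno].
- exists a, b; split => //.
  have Hab : a != b.
    by apply: contraTneq Hd => <-; rewrite inE /= /CR HaR eqxx (Hs a).
  have gab : g a b = false.
    by move: Hd; rewrite inE /= /CR HaR Hab; case: (g a b).
  have -> : CR R a b = true by rewrite /CR HaR Hab.
  split.
    move=> u; rewrite /upd; case: ifP => [/andP[/eqP Hua /eqP Hub]|_]; last exact: Hs.
    by rewrite -Hua Hub eqxx in Hab.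
  split=> //; split.
    move=> x xR y; apply: (connect_mono _ (Hreach x xR y)) => u v Huv.
    by rewrite /upd; case: ifP.
  move=> q p; rewrite /upd; case: ifP => [/andP[/eqP -> _] _ _ //|_]; exact: Hcl.
- have [[a b] Hd] : exists e, e \in diffset g (CR R) by apply/set0Pn; rewrite -card_gt0.
  have HaR : a \notin R by move: (Hno (a, b)); rewrite Hd.
  exists a, b; split => //.
  have -> : CR R a b = false by rewrite /CR (negbTE HaR).
  split.
    by move=> u; rewrite /upd; case: ifP => // _; exact: Hs.
  split=> //; split.
    move=> x xR y; case: (eqVneq x y) => [->|Hxy]; first exact: connect0.
    apply: connect1; rewrite /upd.
    have Hxa : x != a by apply: contraNneq HaR => <-.
    rewrite (negbTE Hxa) /=.
    by move: (Hno (x, y)); rewrite inE /= /CR xR Hxy !andbT => /negbNE/eqP.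
  by move=> q p; rewrite /upd; case: ifP => // _; exact: Hcl.
Qed.

Lemma toC (T : finType) (R : {set T}) : forall n (g : rel T), #|diffset g (CR R)| <= n ->
  simple_digraph g -> Pr g R -> chain (QR R) g (CR R).
Proof.
elim=> [|n IH] g Hn Hs HP.
  move: Hn; rewrite leqn0 => /eqP/diff0 E; rewrite -{1}E; exact: (ch0 (conj Hs HP)).
case: (posnP #|diffset g (CR R)|) => [/diff0 E|Hpos].
  rewrite -{1}E; exact: (ch0 (conj Hs HP)).
have [a [b [Hd [Hs' HP']]]] := flip Hs HP Hpos.
apply: (chS (h := upd g a b (CR R a b))) => //; first exact: differ_upd.
apply: IH Hs' HP'.
rewrite diffset_upd -ltnS; apply: leq_trans Hn.
by rewrite (cardsD1 (a, b) (diffset g (CR R))) Hd.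
Qed.

Definition Q1 (T : finType) (h : rel T) := simple_digraph h /\ exists R, Pr h R.

Lemma simple_CR (T : finType) (R : {set T}) : simple_digraph (CR R).
Proof. by move=> x; rewrite /CR eqxx andbF. Qed.

Lemma P_CR (T : finType) (R : {set T}) : R != set0 -> Pr (CR R) R.
Proof.
move=> R0; split=> //; split; last by move=> q p /andP[].
move=> x xR y; case: (eqVneq x y) => [->|Hxy]; first exact: connect0.
by apply: connect1; rewrite /CR xR Hxy.
Qed.

Lemma grow0 (T : finType) (R : {set T}) : #|~: R| = 0 -> R != set0 ->
  chain (@Q1 T) (CR R) (CR [set: T]).
Proof.
move=> /eqP; rewrite cards_eq0 => /eqP E R0.
have ER : R = [set: T] by rewrite -[R]setCK E setC0.
rewrite -{1}ER; apply: ch0; split; [exact: simple_CR | exists R; exact: P_CR].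
Qed.

Lemma grow (T : finType) : forall n (R : {set T}), #|~: R| <= n -> R != set0 ->
  chain (@Q1 T) (CR R) (CR [set: T]).
Proof.
elim=> [|n IH] R Hn R0.
  by apply: grow0 => //; apply/eqP; rewrite -leqn0.
case: (posnP #|~: R|) => [H0|Hpos]; first exact: grow0.
have [x xnR] : exists x, x \in ~: R by apply/set0Pn; rewrite -card_gt0.
have [r rR] := set0Pn _ R0.
rewrite inE in xnR.
have Hxr : x != r by apply: contraNneq xnR => ->.
set H := upd (CR R) x r true.
have sub : forall a b, CR R a b -> H a b by move=> a b; rewrite /H /upd; case: ifP.
have HP : Pr H (x |: R).
  split; first by apply/set0Pn; exists x; rewrite in_setU1 eqxx.
  split.
    have HR : forall u, u \in R -> forall v, connect H u v.
      move=> u uR v; apply: (connect_mono sub); exact: (proj1 (proj2 (P_CR R0)) u uR v).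
    move=> u; rewrite in_setU1 => /orP[/eqP ->|uR] v; last exact: HR.
    apply: (connect_trans (connect1 _) (HR r rR v)).
    by rewrite /H /upd !eqxx.
  move=> q p; rewrite /H /upd => Hqp _; rewrite in_setU1.
  move: Hqp; case: ifP => [/andP[/eqP -> _] _|_ /andP[qR _]]; first by rewrite eqxx.
  by rewrite qR orbT.
have Hs : simple_digraph H.
  move=> u; rewrite /H /upd; case: ifP => [/andP[/eqP Hux /eqP Hur]|_].
    by rewrite -Hux Hur eqxx in Hxr.
  exact: simple_CR.
apply: (chS (h := H)).
- split; [exact: simple_CR | exists R; exact: P_CR].
- exact: differ_upd.
apply: (chain_trans (h := CR (x |: R))).
  apply: (chain_mono (Q1 := QR (x |: R))); last exact: (toC (leqnn _) Hs HP).
  by move=> g [Hg1 Hg2]; split => //; exists (x |: R).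
apply: IH; last by apply/set0Pn; exists x; rewrite in_setU1 eqxx.
rewrite -ltnS; apply: leq_trans Hn; apply: proper_card; apply/properP; split.
  by apply/subsetP => u; rewrite !inE negb_or => /andP[].
by exists x; rewrite !inE ?eqxx.
Qed.

Lemma g_to_C (T : finType) (g : rel T) R : simple_digraph g -> unique_root g R ->
  chain (QR R) g (CR R).
Proof. move=> Hs /unique_P HP; exact: (toC (leqnn _) Hs HP). Qed.

Lemma QR_Q1 (T : finType) R (g : rel T) : QR R g -> Q1 g.
Proof. by move=> [Hs HP]; split=> //; exists R. Qed.

Theorem lemma16 (T : finType) (g1 g2 : rel T) :
  simple_digraph g1 -> simple_digraph g2 ->
  has_unique_root g1 -> has_unique_root g2 ->
  (exists (k : nat) (G : nat -> rel T),
      G 0 =2 g1 /\ G k =2 g2 /\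
      (forall i, i <= k -> simple_digraph (G i) /\ has_unique_root (G i)) /\
      (forall i, i < k -> differ_at_most_one_edge (G i) (G i.+1)))
  /\
  (forall R : {set T}, unique_root g1 R -> unique_root g2 R ->
    exists (k : nat) (G : nat -> rel T),
      G 0 =2 g1 /\ G k =2 g2 /\
      (forall i, i <= k -> simple_digraph (G i) /\ unique_root (G i) R) /\
      (forall i, i < k -> differ_at_most_one_edge (G i) (G i.+1))).
Proof.
move=> Hs1 Hs2 [R1 HU1] [R2 HU2]; split.
- have C1 : chain (@Q1 T) g1 (CR [set: T]).
    apply: (chain_trans (chain_mono (@QR_Q1 T R1) (g_to_C Hs1 HU1))).
    apply: (grow (leqnn _)); exact: (proj1 (unique_P HU1)).
  have C2 : chain (@Q1 T) g2 (CR [set: T]).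
    apply: (chain_trans (chain_mono (@QR_Q1 T R2) (g_to_C Hs2 HU2))).
    apply: (grow (leqnn _)); exact: (proj1 (unique_P HU2)).
  have := chain_ex (chain_mono (Q2 := fun g => simple_digraph g /\ has_unique_root g) _ (chain_trans C1 (chain_sym C2))); apply.
  by move=> g [Hs [R HP]]; split=> //; exists R; exact: P_unique.
- move=> R HR1 HR2.
  have := chain_ex (chain_mono (Q2 := fun g => simple_digraph g /\ unique_root g R) _ (chain_trans (g_to_C Hs1 HR1) (chain_sym (g_to_C Hs2 HR2)))).
  apply; by move=> g [Hs HP]; split=> //; exact: P_unique.
Qed.
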